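(* Let $R$ be a Dedekind ring or a field, let $A$, $B$, $C$ be $R$-Hopf algebras and $f:A\to B$, $g:A\to C$ morphisms of $R$-Hopf algebras. Then the star product $B\star_A C$ has a natural structure of $R$-Hopf algebra, for which the canonical maps $B\to B\star_A C$ and $C\to B\star_A C$ are morphisms of $R$-Hopf algebras.
   Context: Hopf algebras are associative and coassociative, not necessarily commutative. The star product $B\star_A C$ is the quotient of $B\otimes_R C$ by the two-sided ideal generated by $\{f(a)\otimes 1_C-1_B\otimes g(a)\}_{a\in A}$, with canonical maps $b\mapsto$ class of $b\otimes 1$, $c\mapsto$ class of $1\otimes c$. *)

(* Defs.v *)
From HB Require Import structures.
From mathcomp Require Import all_boot all_order all_algebra.
Set Implicit Arguments.
Unset Strict Implicit.
Unset Printing Implicit Defensive.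
Import GRing.Theory.
Local Open Scope ring_scope.

Section Dedekind.
Variable R : idomainType.

Definition ring_ideal (I : R -> Prop) : Prop :=
  [/\ I 0, (forall x y, I x -> I y -> I (x + y)) & (forall r x, I x -> I (r * x))].

Definition ideal_fin_gen (I : R -> Prop) : Prop :=
  exists s : seq R, forall x,
    I x <-> exists cs : seq R, x = \sum_(i < size s) cs`_i * s`_i.

Definition noetherian_ring : Prop :=
  forall I, ring_ideal I -> ideal_fin_gen I.

Definition prime_ideal (P : R -> Prop) : Prop :=
  [/\ ring_ideal P, ~ P 1 & forall x y, P (x * y) -> P x \/ P y].

Definition maximal_ideal (M : R -> Prop) : Prop :=
  [/\ ring_ideal M, ~ M 1 &
     forall J, ring_ideal J -> (forall x, M x -> J x) ->
       J 1 \/ (forall x, J x -> M x)].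

Definition integrally_closed : Prop :=
  forall z : {fraction R}, integralOver (@tofrac R) z -> exists r : R, z = tofrac r.

Definition dedekind_ring : Prop :=
  [/\ noetherian_ring, integrally_closed &
      forall P, prime_ideal P -> (exists2 x, P x & x != 0) -> maximal_ideal P].

Definition is_field : Prop := forall x : R, x != 0 -> x \is a GRing.unit.

End Dedekind.

(* An element of M (x)_R N is represented by a finite list             *)
(* [:: (m_1, n_1); ...; (m_k, n_k)] standing for sum_i m_i (x) n_i;    *)
(* two lists represent the same tensor iff every R-bilinear map        *)
(* agrees on them (universal property of the tensor product).          *)
Section Tensor.
Variable R : comRingType.

Definition bilinear_map (M N P : lmodType R) (phi : M -> N -> P) : Prop :=
  (forall (a : R) m m' n, phi (a *: m + m') n = a *: phi m n + phi m' n) /\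
  (forall (a : R) m n n', phi m (a *: n + n') = a *: phi m n + phi m n').

Definition trilinear_map (M N Q P : lmodType R) (phi : M -> N -> Q -> P) : Prop :=
  [/\ (forall (a : R) m m' n q, phi (a *: m + m') n q = a *: phi m n q + phi m' n q),
      (forall (a : R) m n n' q, phi m (a *: n + n') q = a *: phi m n q + phi m n' q) &
      (forall (a : R) m n q q', phi m n (a *: q + q') = a *: phi m n q + phi m n q')].

Definition tensor (M N : lmodType R) := seq (M * N).
Definition tensor3 (M N Q : lmodType R) := seq (M * N * Q).

Definition teq (M N : lmodType R) (s t : tensor M N) : Prop :=
  forall (P : lmodType R) (phi : M -> N -> P), bilinear_map phi ->
    \sum_(x <- s) phi x.1 x.2 = \sum_(x <- t) phi x.1 x.2.

Definition teq3 (M N Q : lmodType R) (s t : tensor3 M N Q) : Prop :=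
  forall (P : lmodType R) (phi : M -> N -> Q -> P), trilinear_map phi ->
    \sum_(x <- s) phi x.1.1 x.1.2 x.2 = \sum_(x <- t) phi x.1.1 x.1.2 x.2.

Definition tscale (M N : lmodType R) (a : R) (s : tensor M N) : tensor M N :=
  [seq (a *: x.1, x.2) | x <- s].

Definition tmap (M N M' N' : lmodType R) (f : M -> M') (g : N -> N')
  (s : tensor M N) : tensor M' N' := [seq (f x.1, g x.2) | x <- s].

Definition tmul (A B : algType R) (s t : tensor A B) : tensor A B :=
  [seq (x.1 * y.1, x.2 * y.2) | x <- s, y <- t].

Definition tone (A B : algType R) : tensor A B := [:: (1, 1)].

(* (Delta (x) id) and (id (x) Delta) applied to an element of H (x) H *)
Definition tcomul_l (H : lmodType R) (D : H -> tensor H H) (s : tensor H H)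
  : tensor3 H H H := flatten [seq [seq (z.1, z.2, y.2) | z <- D y.1] | y <- s].
Definition tcomul_r (H : lmodType R) (D : H -> tensor H H) (s : tensor H H)
  : tensor3 H H H := flatten [seq [seq (y.1, z.1, z.2) | z <- D y.2] | y <- s].

End Tensor.

Section Hopf.
Variable R : comRingType.

Definition hopf_axioms (H : algType R) (comul : H -> tensor H H)
  (counit : H -> R) (antipode : H -> H) : Prop :=
  [/\
   [/\ forall (a : R) x y, teq (comul (a *: x + y)) (tscale a (comul x) ++ comul y),
       forall x, teq3 (tcomul_l comul (comul x)) (tcomul_r comul (comul x)),
       forall x y, teq (comul (x * y)) (tmul (comul x) (comul y)) &
       teq (comul 1) (tone H H)],
   [/\ forall (a : R) x y, counit (a *: x + y) = a * counit x + counit y,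
       forall x y, counit (x * y) = counit x * counit y,
       counit 1 = 1,
       forall x, \sum_(z <- comul x) counit z.1 *: z.2 = x &
       forall x, \sum_(z <- comul x) counit z.2 *: z.1 = x] &
   [/\ forall (a : R) x y, antipode (a *: x + y) = a *: antipode x + antipode y,
       forall x, \sum_(z <- comul x) antipode z.1 * z.2 = (counit x)%:A &
       forall x, \sum_(z <- comul x) z.1 * antipode z.2 = (counit x)%:A]].

Record hopfAlgType := HopfAlg {
  hopf_sort :> algType R;
  comul : hopf_sort -> tensor hopf_sort hopf_sort;
  counit : hopf_sort -> R;
  antipode : hopf_sort -> hopf_sort;
  hopf_axiomsP : hopf_axioms comul counit antipode
}.

(* morphism of R-Hopf algebras (= morphism of R-bialgebras) *)
Definition hopf_morphism (H K : hopfAlgType) (f : H -> K) : Prop :=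
  [/\ forall (a : R) x y, f (a *: x + y) = a *: f x + f y,
      forall x y, f (x * y) = f x * f y,
      f 1 = 1,
      forall x, teq (comul (f x)) (tmap f f (comul x)) &
      forall x, counit (f x) = counit x].

(* The two-sided ideal of B (x)_R C generated by {f a (x) 1 - 1 (x) g a}. *)
Definition star_gen (A B C : hopfAlgType) (f : A -> B) (g : A -> C) (a : A)
  : tensor B C := [:: (f a, 1); (-1, g a)].

Definition in_star_ideal (A B C : hopfAlgType) (f : A -> B) (g : A -> C)
  (s : tensor B C) : Prop :=
  exists l : seq (tensor B C * A * tensor B C),
    teq s (flatten [seq tmul (tmul z.1.1 (star_gen f g z.1.2)) z.2 | z <- l]).

(* P, with maps iB : B -> P and iC : C -> P, is (isomorphic as R-algebra,
   compatibly with the canonical maps, to) the star product B *_A C: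
   the images of iB and iC commute, so that
     pi : B (x) C -> P,  b (x) c |-> iB b * iC c
   is an R-algebra morphism; it is surjective and its kernel is the
   two-sided ideal generated by {f a (x) 1 - 1 (x) g a}.  Then
   iB b = pi (b (x) 1) and iC c = pi (1 (x) c) are the canonical maps. *)
Definition is_star_product (A B C : hopfAlgType) (f : A -> B) (g : A -> C)
  (P : algType R) (iB : B -> P) (iC : C -> P) : Prop :=
  [/\ forall b c, iB b * iC c = iC c * iB b,
      forall p : P, exists s : tensor B C, p = \sum_(x <- s) iB x.1 * iC x.2 &
      forall s : tensor B C,
        \sum_(x <- s) iB x.1 * iC x.2 = 0 <-> in_star_ideal f g s].

End Hopf.

(* Main.v *)
Require Import Defs.
From HB Require Import structures.
From mathcomp Require Import all_boot all_order all_algebra.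
From Stdlib Require Import ClassicalEpsilon.
Set Implicit Arguments.
Unset Strict Implicit.
Unset Printing Implicit Defensive.
Import GRing.Theory.
Local Open Scope ring_scope.

Section TensorLemmas.
Context (R : comRingType).

Definition tsum (M N P : lmodType R) (phi : M -> N -> P) (s : tensor M N) : P :=
  \sum_(x <- s) phi x.1 x.2.

Section Bil.
Context (M N P : lmodType R) (phi : M -> N -> P) (hphi : bilinear_map phi).

Lemma bil0l n : phi 0 n = 0.
Proof.
case: hphi => h _; have := h 1 0 0 n; rewrite !scale1r addr0 => e.
have : phi 0 n + phi 0 n = phi 0 n + 0 by rewrite addr0 -e.
by move/addrI.
Qed.
Lemma bil0r m : phi m 0 = 0.
Proof.
case: hphi => _ h; have := h 1 m 0 0; rewrite !scale1r addr0 => e.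
have : phi m 0 + phi m 0 = phi m 0 + 0 by rewrite addr0 -e.
by move/addrI.
Qed.
Lemma bilDl m m' n : phi (m + m') n = phi m n + phi m' n.
Proof. by case: hphi => h _; rewrite -{1}[m]scale1r h scale1r. Qed.
Lemma bilDr m n n' : phi m (n + n') = phi m n + phi m n'.
Proof. by case: hphi => _ h; rewrite -{1}[n]scale1r h scale1r. Qed.
Lemma bilZl a m n : phi (a *: m) n = a *: phi m n.
Proof. by case: hphi => h _; rewrite -[a *: m]addr0 h bil0l addr0. Qed.
Lemma bilZr a m n : phi m (a *: n) = a *: phi m n.
Proof. by case: hphi => _ h; rewrite -[a *: n]addr0 h bil0r addr0. Qed.
Lemma bilNl m n : phi (- m) n = - phi m n.
Proof. by rewrite -scaleN1r bilZl scaleN1r. Qed.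
Lemma bilNr m n : phi m (- n) = - phi m n.
Proof. by rewrite -scaleN1r bilZr scaleN1r. Qed.
Lemma bil_suml I (r : seq I) (F : I -> M) n :
  phi (\sum_(i <- r) F i) n = \sum_(i <- r) phi (F i) n.
Proof.
elim: r => [|i r IH]; first by rewrite !big_nil bil0l.
by rewrite !big_cons bilDl IH.
Qed.
Lemma bil_sumr I (r : seq I) (F : I -> N) m :
  phi m (\sum_(i <- r) F i) = \sum_(i <- r) phi m (F i).
Proof.
elim: r => [|i r IH]; first by rewrite !big_nil bil0r.
by rewrite !big_cons bilDr IH.
Qed.
End Bil.

Lemma tsum_cat (M N P : lmodType R) (phi : M -> N -> P) s t :
  tsum phi (s ++ t) = tsum phi s + tsum phi t.
Proof. by rewrite /tsum big_cat. Qed.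
Lemma tsum_nil (M N P : lmodType R) (phi : M -> N -> P) : tsum phi [::] = 0.
Proof. by rewrite /tsum big_nil. Qed.
Lemma tsum_cons (M N P : lmodType R) (phi : M -> N -> P) x s :
  tsum phi (x :: s) = phi x.1 x.2 + tsum phi s.
Proof. by rewrite /tsum big_cons. Qed.
Lemma tsum_tscale (M N P : lmodType R) (phi : M -> N -> P) a s :
  bilinear_map phi -> tsum phi (tscale a s) = a *: tsum phi s.
Proof.
move=> hb; rewrite /tsum /tscale big_map scaler_sumr.
by apply: eq_bigr => x _; rewrite bilZl.
Qed.
Lemma tsum_tmap (M N M' N' P : lmodType R) (f : M -> M') (g : N -> N') (phi : M' -> N' -> P) s :
  tsum phi (tmap f g s) = tsum (fun m n => phi (f m) (g n)) s.
Proof. by rewrite /tsum /tmap big_map. Qed.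
Lemma tsum_tmul (A B : algType R) (P : lmodType R) (phi : A -> B -> P) s t :
  tsum phi (tmul s t) = \sum_(x <- s) \sum_(y <- t) phi (x.1 * y.1) (x.2 * y.2).
Proof. by rewrite /tsum /tmul big_allpairs_dep. Qed.

Lemma teqP (M N : lmodType R) (s t : tensor M N) :
  teq s t <-> forall (P : lmodType R) (phi : M -> N -> P), bilinear_map phi -> tsum phi s = tsum phi t.
Proof. by []. Qed.

Lemma teq_refl (M N : lmodType R) (s : tensor M N) : teq s s.
Proof. by []. Qed.
Lemma teq_sym (M N : lmodType R) (s t : tensor M N) : teq s t -> teq t s.
Proof. by move=> h P phi hp; rewrite h. Qed.
Lemma teq_trans (M N : lmodType R) (s t u : tensor M N) : teq s t -> teq t u -> teq s u.
Proof. by move=> h1 h2 P phi hp; rewrite h1 // h2. Qed.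
Lemma teq_cat (M N : lmodType R) (s s' t t' : tensor M N) :
  teq s s' -> teq t t' -> teq (s ++ t) (s' ++ t').
Proof. by move=> h1 h2 P phi hp; rewrite !big_cat /= h1 // h2. Qed.
Lemma teq_tscale (M N : lmodType R) a (s s' : tensor M N) :
  teq s s' -> teq (tscale a s) (tscale a s').
Proof. move=> h P phi hp; have := tsum_tscale a s hp; have := tsum_tscale a s' hp.
by rewrite /tsum => -> ->; rewrite h. Qed.

Lemma tsum_bil_l (M N P : lmodType R) (phi : M -> N -> P) (s : tensor M N) :
  (forall x, x \in s -> True) -> tsum phi s = tsum phi s.
Proof. by []. Qed.


Lemma tsum_ext (M N P : lmodType R) (F G : M -> N -> P) s :
  (forall a b, F a b = G a b) -> tsum F s = tsum G s.
Proof. by move=> h; apply: eq_bigr => x _; rewrite h. Qed.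
Lemma tsum_linF (M N P : lmodType R) (F G K : M -> N -> P) c s :
  (forall a b, F a b = c *: G a b + K a b) -> tsum F s = c *: tsum G s + tsum K s.
Proof.
by move=> h; rewrite /tsum scaler_sumr -big_split; apply: eq_bigr => x _; rewrite h.
Qed.
Lemma tsum_exch (M N M' N' P : lmodType R) (F : M -> N -> M' -> N' -> P) s t :
  tsum (fun a b => tsum (F a b) t) s = tsum (fun c d => tsum (fun a b => F a b c d) s) t.
Proof. exact: exchange_big. Qed.
Lemma tsum_scale (M N P : lmodType R) (F : M -> N -> P) c s :
  c *: tsum F s = tsum (fun a b => c *: F a b) s.
Proof. by rewrite /tsum scaler_sumr. Qed.
Lemma tsum_add (M N P : lmodType R) (F G : M -> N -> P) s :
  tsum F s + tsum G s = tsum (fun a b => F a b + G a b) s.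
Proof. by rewrite /tsum -big_split. Qed.
Lemma tsum_mull (M N : lmodType R) (P : algType R) (F : M -> N -> P) K s :
  K * tsum F s = tsum (fun a b => K * F a b) s.
Proof. by rewrite /tsum mulr_sumr. Qed.
Lemma tsum_mulr (M N : lmodType R) (P : algType R) (F : M -> N -> P) K s :
  tsum F s * K = tsum (fun a b => F a b * K) s.
Proof. by rewrite /tsum mulr_suml. Qed.
Lemma tsum0 (M N P : lmodType R) (s : tensor M N) : tsum (fun _ _ => (0 : P)) s = 0.
Proof. by rewrite /tsum big1. Qed.

Lemma teq_tmul (A B : algType R) (s s' t t' : tensor A B) :
  teq s s' -> teq t t' -> teq (tmul s t) (tmul s' t').
Proof.
move=> h1 h2 P phi hp; rewrite -!/(tsum _ _) !tsum_tmul.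
have hb1 : bilinear_map (fun a b => tsum (fun c d => phi (a * c) (b * d)) t).
  split=> c m m' n; rewrite tsum_scale tsum_add; apply: tsum_ext => a b.
    by rewrite mulrDl -scalerAl (bilDl hp) (bilZl hp).
  by rewrite mulrDl -scalerAl (bilDr hp) (bilZr hp).
apply: etrans (h1 _ _ hb1) _.
change (tsum (fun a b => tsum (fun c d => phi (a * c) (b * d)) t) s' =
  tsum (fun a b => tsum (fun c d => phi (a * c) (b * d)) t') s').
rewrite tsum_exch [RHS]tsum_exch; apply: h2.
split=> c m m' n; rewrite tsum_scale tsum_add; apply: tsum_ext => a b.
  by rewrite mulrDr -scalerAr (bilDl hp) (bilZl hp).
by rewrite mulrDr -scalerAr (bilDr hp) (bilZr hp).
Qed.

End TensorLemmas.

Section HopfL.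
Context (R : comRingType) (H : hopfAlgType R).
Local Notation D := (@comul R H).
Local Notation e := (@counit R H).
Local Notation S := (@antipode R H).

Definition sw (M : lmodType R) (x : H) (F : H -> H -> M) := tsum F (D x).

Lemma hax : hopf_axioms D e S. Proof. exact: hopf_axiomsP. Qed.

Lemma sw_lin (M : lmodType R) (F : H -> H -> M) a x y : bilinear_map F ->
  sw (a *: x + y) F = a *: sw x F + sw y F.
Proof.
move=> hF; case: hax => [[hl _ _ _] _ _]; rewrite /sw.
have := hl a x y _ _ hF; rewrite -!/(tsum _ _) => ->.
by rewrite tsum_cat tsum_tscale.
Qed.
Lemma sw0 (M : lmodType R) (F : H -> H -> M) : bilinear_map F -> sw 0 F = 0.
Proof.
move=> hF; have := sw_lin 1 0 0 hF; rewrite !scale1r addr0 => h.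
have : sw 0 F + sw 0 F = sw 0 F + 0 by rewrite addr0 -h.
by move/addrI.
Qed.
Lemma swD (M : lmodType R) (F : H -> H -> M) x y : bilinear_map F ->
  sw (x + y) F = sw x F + sw y F.
Proof. by move=> hF; rewrite -{1}[x]scale1r sw_lin // scale1r. Qed.
Lemma swZ (M : lmodType R) (F : H -> H -> M) a x : bilinear_map F ->
  sw (a *: x) F = a *: sw x F.
Proof. by move=> hF; rewrite -[a *: x]addr0 sw_lin // sw0 // addr0. Qed.
Lemma swN (M : lmodType R) (F : H -> H -> M) x : bilinear_map F ->
  sw (- x) F = - sw x F.
Proof. by move=> hF; rewrite -[- x]scaleN1r swZ // scaleN1r. Qed.
Lemma sw_sum (M : lmodType R) (F : H -> H -> M) I (r : seq I) (G : I -> H) :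
  bilinear_map F -> sw (\sum_(i <- r) G i) F = \sum_(i <- r) sw (G i) F.
Proof.
move=> hF; elim: r => [|i r IH]; first by rewrite !big_nil sw0.
by rewrite !big_cons swD // IH.
Qed.

Lemma sw_coassoc (M : lmodType R) (F : H -> H -> H -> M) x : trilinear_map F ->
  sw x (fun a b => sw a (fun c d => F c d b)) = sw x (fun a b => sw b (fun c d => F a c d)).
Proof.
move=> hF; case: hax => [[_ hc _ _] _ _]; have := hc x _ _ hF.
rewrite /tcomul_l /tcomul_r !big_flatten /= !big_map /sw /tsum.
by under eq_bigr do rewrite big_map; under [RHS]eq_bigr do rewrite big_map.
Qed.

Lemma sw_mul (M : lmodType R) (F : H -> H -> M) x y : bilinear_map F ->
  sw (x * y) F = sw x (fun a b => sw y (fun c d => F (a * c) (b * d))).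
Proof.
move=> hF; case: hax => [[_ _ hm _] _ _]; rewrite /sw.
have := hm x y _ _ hF; rewrite -!/(tsum _ _) => ->.
by rewrite tsum_tmul.
Qed.

Lemma sw1 (M : lmodType R) (F : H -> H -> M) : bilinear_map F -> sw 1 F = F 1 1.
Proof.
move=> hF; case: hax => [[_ _ _ h1] _ _]; rewrite /sw.
have := h1 _ _ hF; rewrite -!/(tsum _ _) => ->.
by rewrite tsum_cons tsum_nil addr0.
Qed.

Lemma eD a x y : e (a *: x + y) = a * e x + e y.
Proof. by case: hax => [_ [h _ _ _ _] _]; apply: h. Qed.
Lemma eM x y : e (x * y) = e x * e y.
Proof. by case: hax => [_ [_ h _ _ _] _]; apply: h. Qed.
Lemma e1 : e 1 = 1.
Proof. by case: hax => [_ [_ _ h _ _] _]; apply: h. Qed.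
Lemma e_l x : sw x (fun a b => e a *: b) = x.
Proof. by case: hax => [_ [_ _ _ h _] _]; apply: h. Qed.
Lemma e_r x : sw x (fun a b => e b *: a) = x.
Proof. by case: hax => [_ [_ _ _ _ h] _]; apply: h. Qed.
Lemma SDZ a x y : S (a *: x + y) = a *: S x + S y.
Proof. by case: hax => [_ _ [h _ _]]; apply: h. Qed.
Lemma S_l x : sw x (fun a b => S a * b) = (e x)%:A.
Proof. by case: hax => [_ _ [_ h _]]; apply: h. Qed.
Lemma S_r x : sw x (fun a b => a * S b) = (e x)%:A.
Proof. by case: hax => [_ _ [_ _ h]]; apply: h. Qed.

Lemma e0 : e 0 = 0.
Proof.
have := eD 1 0 0; rewrite scale1r addr0 mul1r => h.
have : e 0 + e 0 = e 0 + 0 by rewrite addr0 -h.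
by move/addrI.
Qed.
Lemma eDl x y : e (x + y) = e x + e y.
Proof. by rewrite -{1}[x]scale1r eD mul1r. Qed.
Lemma eZ a x : e (a *: x) = a * e x.
Proof. by rewrite -[a *: x]addr0 eD e0 addr0. Qed.
Lemma S0 : S 0 = 0.
Proof.
have := SDZ 1 0 0; rewrite !scale1r addr0 => h.
have : S 0 + S 0 = S 0 + 0 by rewrite addr0 -h.
by move/addrI.
Qed.
Lemma SD x y : S (x + y) = S x + S y.
Proof. by rewrite -{1}[x]scale1r SDZ scale1r. Qed.
Lemma SZ a x : S (a *: x) = a *: S x.
Proof. by rewrite -[a *: x]addr0 SDZ S0 addr0. Qed.
Lemma SN x : S (- x) = - S x.
Proof. by rewrite -[- x]scaleN1r SZ scaleN1r. Qed.
Lemma S_sum I (r : seq I) (G : I -> H) : S (\sum_(i <- r) G i) = \sum_(i <- r) S (G i).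
Proof. elim: r => [|i r IH]; first by rewrite !big_nil S0. by rewrite !big_cons SD IH. Qed.


Definition linF (M M' : lmodType R) (G : M -> M') := forall c a a', G (c *: a + a') = c *: G a + G a'.
Lemma linF0 (M M' : lmodType R) (G : M -> M') : linF G -> G 0 = 0.
Proof.
move=> hG; have := hG 1 0 0; rewrite !scale1r addr0 => h.
have : G 0 + G 0 = G 0 + 0 by rewrite addr0 -h.
by move/addrI.
Qed.
Lemma linF_sum (M M' : lmodType R) (G : M -> M') I (r : seq I) (F : I -> M) :
  linF G -> G (\sum_(i <- r) F i) = \sum_(i <- r) G (F i).
Proof.
move=> hG; elim: r => [|i r IH]; first by rewrite !big_nil (linF0 hG).
by rewrite !big_cons -[F i]scale1r hG IH !scale1r.
Qed.
Lemma linFZ (M M' : lmodType R) (G : M -> M') c a : linF G -> G (c *: a) = c *: G a.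
Proof. by move=> hG; rewrite -[c *: a]addr0 hG (linF0 hG) addr0. Qed.

Lemma e_rG (M : lmodType R) (G : H -> M) x : linF G -> sw x (fun a b => e b *: G a) = G x.
Proof.
move=> hG; rewrite -{2}(e_r x) /sw /tsum linF_sum //.
by apply: eq_bigr => z _; rewrite linFZ.
Qed.
Lemma e_lG (M : lmodType R) (G : H -> M) x : linF G -> sw x (fun a b => e a *: G b) = G x.
Proof.
move=> hG; rewrite -{2}(e_l x) /sw /tsum linF_sum //.
by apply: eq_bigr => z _; rewrite linFZ.
Qed.

Lemma sw_const (M : algType R) (x : H) (F : H -> H -> M) K L :
  sw x (fun a b => K * F a b * L) = K * sw x F * L.
Proof. by rewrite /sw tsum_mull tsum_mulr. Qed.

Ltac lin_norm := repeat progress rewrite ?SDZ ?mulrDl ?mulrDr -?scalerAl -?scalerAr.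
Ltac ml_tac := split; intros; repeat (apply: tsum_linF => ? ?); lin_norm.
Ltac bil_tac := ml_tac.

Lemma S1 : S 1 = 1.
Proof.
have := S_l 1; rewrite sw1; last by bil_tac.
by rewrite mulr1 e1 scale1r.
Qed.

Lemma SM x y : S (x * y) = S y * S x.
Proof.
pose E := sw x (fun x1 x2 => sw y (fun y1 y2 => sw x2 (fun u v =>
  sw y2 (fun p q => S (x1 * y1) * (u * p) * S q * S v)))).
have Ea : E = S (x * y).
  rewrite /E.
  transitivity (sw x (fun x1 x2 => sw x2 (fun u v => sw y (fun y1 y2 =>
      e y2 *: (S (x1 * y1) * u * S v))))).
    apply: tsum_ext => x1 x2; rewrite /sw tsum_exch; apply: tsum_ext => u v.
    apply: tsum_ext => y1 y2.
    transitivity (sw y2 (fun p q => (S (x1 * y1) * u) * (p * S q) * S v)).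
      by apply: tsum_ext => p q; rewrite !mulrA.
    by rewrite sw_const S_r mulr_algr -scalerAl.
  transitivity (sw x (fun x1 x2 => sw x2 (fun u v => S (x1 * y) * (u * S v) * 1))).
    apply: tsum_ext => x1 x2; apply: tsum_ext => u v.
    rewrite (@e_rG _ (fun a => S (x1 * a) * u * S v) y); first by rewrite mulr1 mulrA.
    by move=> c a a'; rewrite mulrDr -scalerAr SDZ mulrDl mulrDl -!scalerAl.
  transitivity (sw x (fun x1 x2 => e x2 *: S (x1 * y))).
    apply: tsum_ext => x1 x2; by rewrite sw_const S_r mulr1 mulr_algr.
  apply: e_rG => c a a'; by rewrite mulrDl -scalerAl SDZ.
have Eb : E = S y * S x.
  rewrite /E.
  transitivity (sw x (fun x1 x2 => sw x2 (fun u v => sw y (fun y1 y2 =>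
      sw y2 (fun p q => S (x1 * y1) * (u * p) * S q * S v))))).
    by apply: tsum_ext => x1 x2; rewrite /sw tsum_exch.
  rewrite -(@sw_coassoc _ (fun x1 u v => sw y (fun y1 y2 =>
      sw y2 (fun p q => S (x1 * y1) * (u * p) * S q * S v))) x); last first.
    by ml_tac.
  transitivity (sw x (fun a b => sw a (fun c d => sw y (fun a' q =>
      sw a' (fun y1 p => S (c * y1) * (d * p) * S q * S b))))).
    apply: tsum_ext => a b; apply: tsum_ext => c d.
    by rewrite -(@sw_coassoc _ (fun y1 p q => S (c * y1) * (d * p) * S q * S b) y) //; ml_tac.
  transitivity (sw x (fun a b => sw y (fun a' q => sw a (fun c d =>
      sw a' (fun y1 p => S (c * y1) * (d * p) * S q * S b))))).
    by apply: tsum_ext => a b; rewrite /sw tsum_exch.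
  transitivity (sw x (fun a b => sw y (fun a' q => (e a * e a') *: (S q * S b)))).
    apply: tsum_ext => a b; apply: tsum_ext => a' q.
    transitivity (sw (a * a') (fun w1 w2 => S w1 * w2 * (S q * S b))).
      rewrite sw_mul; last by ml_tac.
      by apply: tsum_ext => c d; apply: tsum_ext => y1 p; rewrite !mulrA.
    by rewrite /sw -tsum_mulr -/(sw _ _) S_l eM mulr_algl.
  transitivity (sw x (fun a b => e a *: (S y * S b))).
    apply: tsum_ext => a b.
    transitivity (e a *: sw y (fun a' q => e a' *: (S q * S b))).
      by rewrite /sw tsum_scale; apply: tsum_ext => a' q; rewrite scalerA.
    by rewrite (@e_lG _ (fun q => S q * S b)) // => c u u'; lin_norm.
  by rewrite (@e_lG _ (fun b => S y * S b)) // => c u u'; lin_norm.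
by rewrite -Ea Eb.
Qed.

End HopfL.
Section Morph.
Context (R : comRingType) (A B : hopfAlgType R) (f : A -> B) (hf : hopf_morphism f).

Lemma fDZ a x y : f (a *: x + y) = a *: f x + f y.
Proof. by case: hf => h _ _ _ _; apply: h. Qed.
Lemma fM x y : f (x * y) = f x * f y.
Proof. by case: hf => _ h _ _ _; apply: h. Qed.
Lemma f1 : f 1 = 1.
Proof. by case: hf => _ _ h _ _; apply: h. Qed.
Lemma fe x : counit (f x) = counit x.
Proof. by case: hf => _ _ _ _ h; apply: h. Qed.
Lemma f_sw (M : lmodType R) (phi : B -> B -> M) x : bilinear_map phi ->
  sw (f x) phi = sw x (fun a b => phi (f a) (f b)).
Proof.
move=> hp; case: hf => _ _ _ h _; rewrite /sw.
by have := h x _ phi hp; rewrite -!/(tsum _ _) => ->; rewrite tsum_tmap.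
Qed.
Lemma f0 : f 0 = 0.
Proof.
have := fDZ 1 0 0; rewrite !scale1r addr0 => h.
have : f 0 + f 0 = f 0 + 0 by rewrite addr0 -h.
by move/addrI.
Qed.
Lemma fZ a x : f (a *: x) = a *: f x.
Proof. by rewrite -[a *: x]addr0 fDZ f0 addr0. Qed.

Ltac lin_normf := repeat progress rewrite ?SDZ ?fDZ ?mulrDl ?mulrDr -?scalerAl -?scalerAr.
Ltac ml_tacf := split; intros; repeat (apply: tsum_linF => ? ?); lin_normf.

Lemma fS x : f (antipode x) = antipode (f x).
Proof.
pose E := sw x (fun a1 a2 => sw a2 (fun u v => f (antipode a1) * f u * antipode (f v))).
have Ea : E = f (antipode x).
  rewrite /E; transitivity (sw x (fun a1 a2 => counit a2 *: f (antipode a1))).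
    apply: tsum_ext => a1 a2.
    transitivity (f (antipode a1) * sw a2 (fun u v => f u * antipode (f v)) * 1).
      by rewrite -sw_const; apply: tsum_ext => u v; rewrite mulr1 mulrA.
    rewrite -(@f_sw _ (fun u v => u * antipode v)); last by ml_tacf.
    by rewrite S_r fe mulr1 mulr_algr.
  by rewrite (@e_rG _ _ _ (fun a => f (antipode a))) // => c u u'; lin_normf.
have Eb : E = antipode (f x).
  rewrite /E -(@sw_coassoc _ _ _ (fun a1 u v => f (antipode a1) * f u * antipode (f v))); last by ml_tacf.
  transitivity (sw x (fun a v => counit a *: antipode (f v))).
    apply: tsum_ext => a v.
    transitivity (f (sw a (fun a1 u => antipode a1 * u)) * antipode (f v)).
      rewrite /sw -tsum_mulr (@linF_sum _ _ _ f) //; last by move=> ? ? ?; lin_normf.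
      by congr (_ * _); apply: eq_bigr => z _; rewrite fM.
    by rewrite S_l fZ f1 mulr_algl.
  by rewrite (@e_lG _ _ _ (fun v => antipode (f v))) // => c u u'; lin_normf.
by rewrite -Ea Eb.
Qed.

End Morph.

Section TeqAlg.
Context (R : comRingType) (A B : algType R).
Implicit Types s t u : tensor A B.

Lemma teq_tsum s t : (forall (P : lmodType R) (phi : A -> B -> P), bilinear_map phi -> tsum phi s = tsum phi t) -> teq s t.
Proof. by []. Qed.

Lemma tmul_catl s t u : teq (tmul (s ++ t) u) (tmul s u ++ tmul t u).
Proof. by apply: teq_tsum => P phi hp; rewrite tsum_cat !tsum_tmul big_cat. Qed.
Lemma tmul_catr s t u : teq (tmul u (s ++ t)) (tmul u s ++ tmul u t).
Proof.
apply: teq_tsum => P phi hp; rewrite tsum_cat !tsum_tmul -big_split.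
by apply: eq_bigr => x _; rewrite big_cat.
Qed.
Lemma tmul_scalel a s u : teq (tmul (tscale a s) u) (tscale a (tmul s u)).
Proof.
apply: teq_tsum => P phi hp; rewrite tsum_tscale // !tsum_tmul /tscale big_map scaler_sumr.
apply: eq_bigr => x _; rewrite scaler_sumr; apply: eq_bigr => y _ /=.
by rewrite -scalerAl (bilZl hp).
Qed.
Lemma tmul_scaler a s u : teq (tmul u (tscale a s)) (tscale a (tmul u s)).
Proof.
apply: teq_tsum => P phi hp; rewrite tsum_tscale // !tsum_tmul /tscale scaler_sumr.
apply: eq_bigr => x _; rewrite big_map scaler_sumr; apply: eq_bigr => y _ /=.
by rewrite -scalerAr (bilZl hp).
Qed.
Lemma tmul_assoc s t u : teq (tmul (tmul s t) u) (tmul s (tmul t u)).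
Proof.
apply: teq_tsum => P phi hp; rewrite !tsum_tmul.
rewrite /tmul big_allpairs_dep; apply: eq_bigr => x _.
rewrite big_allpairs_dep; apply: eq_bigr => y _; apply: eq_bigr => z _ /=.
by rewrite !mulrA.
Qed.
Lemma tmul_nilr s : teq (tmul s [::]) [::].
Proof. by apply: teq_tsum => P phi hp; rewrite tsum_tmul tsum_nil big1 // => x; rewrite big_nil. Qed.
Lemma tmul_nill s : tmul [::] s = [::].
Proof. by []. Qed.
Lemma tmul1l s : teq (tmul (tone A B) s) s.
Proof.
apply: teq_tsum => P phi hp; rewrite tsum_tmul big_cons big_nil addr0 /=.
by apply: eq_bigr => x _; rewrite !mul1r.
Qed.
Lemma tmul1r s : teq (tmul s (tone A B)) s.
Proof.
apply: teq_tsum => P phi hp; rewrite tsum_tmul; apply: eq_bigr => x _.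
by rewrite big_cons big_nil addr0 /= !mulr1.
Qed.
Lemma teq_catC s t : teq (s ++ t) (t ++ s).
Proof. by apply: teq_tsum => P phi hp; rewrite !tsum_cat addrC. Qed.
Lemma teq_catA s t u : teq (s ++ t ++ u) ((s ++ t) ++ u).
Proof. by rewrite catA. Qed.
Lemma tscale_cat a s t : tscale a (s ++ t) = tscale a s ++ tscale a t.
Proof. by rewrite /tscale map_cat. Qed.
Lemma tscaleA a b s : teq (tscale a (tscale b s)) (tscale (a * b) s).
Proof. by apply: teq_tsum => P phi hp; rewrite !tsum_tscale // scalerA. Qed.
Lemma tscale1 s : teq (tscale 1 s) s.
Proof. by apply: teq_tsum => P phi hp; rewrite !tsum_tscale // scale1r. Qed.
Lemma tscaleDr a b s : teq (tscale (a + b) s) (tscale a s ++ tscale b s).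
Proof. by apply: teq_tsum => P phi hp; rewrite tsum_cat !tsum_tscale // scalerDl. Qed.
Lemma tscale_subv s : teq (s ++ tscale (-1) s) [::].
Proof. by apply: teq_tsum => P phi hp; rewrite tsum_cat tsum_tscale // scaleN1r subrr tsum_nil. Qed.
End TeqAlg.

Section Ideal.
Context (R : comRingType) (A B C : hopfAlgType R) (f : A -> B) (g : A -> C).
Local Notation I := (in_star_ideal f g).
Definition iexpr (l : seq (tensor B C * A * tensor B C)) : tensor B C :=
  flatten [seq tmul (tmul z.1.1 (star_gen f g z.1.2)) z.2 | z <- l].
Lemma iexpr_cons z l : iexpr (z :: l) = tmul (tmul z.1.1 (star_gen f g z.1.2)) z.2 ++ iexpr l.
Proof. by []. Qed.
Lemma iexpr_cat l1 l2 : iexpr (l1 ++ l2) = iexpr l1 ++ iexpr l2.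
Proof. by rewrite /iexpr map_cat flatten_cat. Qed.

Lemma I_teq (s t : tensor B C) : teq s t -> I t -> I s.
Proof. by move=> h [l hl]; exists l; apply: teq_trans h hl. Qed.
Lemma I_nil : I [::].
Proof. by exists [::]. Qed.
Lemma I_teq0 (s : tensor B C) : teq s [::] -> I s.
Proof. by move=> h; apply: I_teq h I_nil. Qed.
Lemma I_cat s t : I s -> I t -> I (s ++ t).
Proof.
move=> [l1 h1] [l2 h2]; exists (l1 ++ l2).
by rewrite -/(iexpr _) iexpr_cat; apply: teq_cat.
Qed.
Lemma I_scale a s : I s -> I (tscale a s).
Proof.
move=> [l h]; exists [seq (tscale a z.1.1, z.1.2, z.2) | z <- l].
rewrite -/(iexpr _); apply: teq_trans (teq_tscale a h) _.
rewrite -/(iexpr _); elim: l {h} => [|z l IH] //=.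
rewrite !iexpr_cons tscale_cat; apply: teq_cat => //.
apply: teq_trans (teq_sym (tmul_scalel _ _ _)) _.
apply: teq_tmul => //; exact: teq_sym (tmul_scalel _ _ _).
Qed.
Lemma I_mull u s : I s -> I (tmul u s).
Proof.
move=> [l h]; exists [seq (tmul u z.1.1, z.1.2, z.2) | z <- l].
eapply teq_trans; first exact: (teq_tmul (teq_refl u) h).
rewrite -/(iexpr _); elim: l {h} => [|z l IH] /=; first exact: tmul_nilr.
rewrite !iexpr_cons; apply: teq_trans (tmul_catr _ _ _) _; apply: teq_cat => //.
apply: teq_trans (teq_sym (tmul_assoc _ _ _)) _.
apply: teq_tmul => //; exact: teq_sym (tmul_assoc _ _ _).
Qed.
Lemma I_mulr u s : I s -> I (tmul s u).
Proof.
move=> [l h]; exists [seq (z.1.1, z.1.2, tmul z.2 u) | z <- l].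
eapply teq_trans; first exact: (teq_tmul h (teq_refl u)).
rewrite -/(iexpr _); elim: l {h} => [|z l IH] //=.
rewrite !iexpr_cons; apply: teq_trans (tmul_catl _ _ _) _; apply: teq_cat => //.
exact: tmul_assoc.
Qed.

Definition srelP (s t : tensor B C) := I (s ++ tscale (-1) t).
Lemma srel_teq s t : teq s t -> srelP s t.
Proof.
move=> h; apply: I_teq0; apply: teq_trans (teq_cat h (teq_refl _)) _.
exact: tscale_subv.
Qed.
Lemma srel_sym s t : srelP s t -> srelP t s.
Proof.
move=> h; apply: I_teq (I_scale (-1) h); apply: teq_tsum => P phi hp.
rewrite tsum_tscale // !tsum_cat !tsum_tscale // !scaleN1r; by rewrite opprD opprK addrC.
Qed.
Lemma srel_trans s t u : srelP s t -> srelP t u -> srelP s u.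
Proof.
move=> h1 h2; apply: I_teq (I_cat h1 h2); apply: teq_tsum => P phi hp.
rewrite !tsum_cat !tsum_tscale // !scaleN1r.
by rewrite addrA addrNK.
Qed.
Lemma srel_cat s s' t t' : srelP s s' -> srelP t t' -> srelP (s ++ t) (s' ++ t').
Proof.
move=> h1 h2; apply: I_teq (I_cat h1 h2); apply: teq_tsum => P phi hp.
rewrite !tsum_cat !tsum_tscale // !tsum_cat !scaleN1r.
by rewrite opprD !addrA; congr (_ + _); rewrite -!addrA; congr (_ + _); rewrite addrC.
Qed.
Lemma srel_scale a s s' : srelP s s' -> srelP (tscale a s) (tscale a s').
Proof.
move=> h; apply: I_teq (I_scale a h); apply: teq_tsum => P phi hp.
by rewrite !tsum_cat !tsum_tscale // !tsum_cat !tsum_tscale // !scaleN1r scalerDr scalerN.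
Qed.
Lemma srel_mul s s' t t' : srelP s s' -> srelP t t' -> srelP (tmul s t) (tmul s' t').
Proof.
move=> h1 h2; apply: I_teq (I_cat (I_mulr t h1) (I_mull s' h2)).
apply: teq_sym; apply: teq_trans (teq_cat (tmul_catl _ _ _) (tmul_catr _ _ _)) _.
apply: teq_trans (teq_cat (teq_cat (teq_refl _) (tmul_scalel _ _ _))
   (teq_cat (teq_refl _) (tmul_scaler _ _ _))) _.
apply: teq_tsum => P phi hp.
rewrite !tsum_cat !tsum_tscale // !scaleN1r.
by rewrite addrA addrNK.
Qed.
End Ideal.

Local Open Scope quotient_scope.

Definition asb (P : Prop) : bool := if excluded_middle_informative P then true else false.
Lemma asbP (P : Prop) : reflect P (asb P).
Proof. by rewrite /asb; case: excluded_middle_informative => h; constructor. Qed.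

Section Star.
Context (R : comRingType) (A B C : hopfAlgType R) (f : A -> B) (g : A -> C)
  (hf : hopf_morphism f) (hg : hopf_morphism g).
Local Notation I := (in_star_ideal f g).
Local Notation T := (seq (B * C)).

Definition srel (s t : T) : bool := asb (srelP f g s t).
Lemma srel_refl : reflexive srel.
Proof. by move=> s; apply/asbP; apply: srel_teq. Qed.
Lemma srel_symm : symmetric srel.
Proof. by move=> s t; apply/asbP/asbP; apply: srel_sym. Qed.
Lemma srel_tr : transitive srel.
Proof. by move=> t s u /asbP h1 /asbP h2; apply/asbP; apply: srel_trans h1 h2. Qed.

Canonical srel_equiv := EquivRel srel srel_refl srel_symm srel_tr.
Definition Q := {eq_quot srel}.
HB.instance Definition _ : EqQuotient _ srel Q := EqQuotient.on Q.
HB.instance Definition _ := Choice.on Q.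

Notation pi := (\pi_Q).

Lemma pi_eq (s t : T) : srelP f g s t -> pi s = pi t.
Proof. by move=> h; apply/eqmodP/asbP. Qed.
Lemma pi_eqE (s t : T) : pi s = pi t -> srelP f g s t.
Proof. by move/eqmodP/asbP. Qed.
Lemma reprP (s : T) : srelP f g (repr (pi s)) s.
Proof. by apply: pi_eqE; rewrite reprK. Qed.

Definition qzero : Q := pi [::].
Fact q_key : unit. Proof. by []. Qed.
Definition qadd : Q -> Q -> Q := locked_with q_key (fun x y => pi (repr x ++ repr y)).
Definition qscale : R -> Q -> Q := locked_with q_key (fun a x => pi (tscale a (repr x))).
Definition qopp (x : Q) : Q := qscale (-1) x.
Definition qmul : Q -> Q -> Q := locked_with q_key (fun x y => pi (tmul (repr x) (repr y))).
Definition qone : Q := pi (tone B C).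

Lemma qaddE s t : qadd (pi s) (pi t) = pi (s ++ t).
Proof. rewrite [qadd]unlock /=. by apply: pi_eq; apply: srel_cat; apply: reprP. Qed.
Lemma qscaleE a s : qscale a (pi s) = pi (tscale a s).
Proof. rewrite [qscale]unlock /=; by apply: pi_eq; apply: srel_scale; apply: reprP. Qed.
Lemma qoppE s : qopp (pi s) = pi (tscale (-1) s).
Proof. exact: qscaleE. Qed.
Lemma qmulE s t : qmul (pi s) (pi t) = pi (tmul s t).
Proof. rewrite [qmul]unlock /=; by apply: pi_eq; apply: srel_mul; apply: reprP. Qed.
Lemma pi_teq s t : teq s t -> pi s = pi t.
Proof. by move=> h; apply: pi_eq; apply: srel_teq. Qed.

Lemma qaddA : associative qadd.
Proof. move=> x y z; elim/quotW: x => x; elim/quotW: y => y; elim/quotW: z => z. by rewrite !qaddE catA. Qed.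
Lemma qaddC : commutative qadd.
Proof. move=> x y; elim/quotW: x => x; elim/quotW: y => y. by rewrite !qaddE; apply: pi_teq; apply: teq_catC. Qed.
Lemma qadd0 : left_id qzero qadd.
Proof. move=> x; elim/quotW: x => x. by rewrite /qzero qaddE. Qed.
Lemma qaddN : left_inverse qzero qopp qadd.
Proof.
move=> x; elim/quotW: x => x; rewrite qoppE qaddE /qzero; apply: pi_teq.
by apply: teq_trans (teq_catC _ _) (tscale_subv _).
Qed.
HB.instance Definition _ := GRing.isZmodule.Build Q qaddA qaddC qadd0 qaddN.

Lemma qscaleA a b v : qscale a (qscale b v) = qscale (a * b) v.
Proof. by elim/quotW: v => x; rewrite !qscaleE; apply: pi_teq; apply: tscaleA. Qed.
Lemma qscale1 : left_id 1 qscale.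
Proof. move=> x; elim/quotW: x => x. by rewrite !qscaleE; apply: pi_teq; apply: tscale1. Qed.
Lemma qscaleDr : right_distributive qscale +%R.
Proof.
by move=> a x y; elim/quotW: x => x; elim/quotW: y => y; rewrite /GRing.add /= !qaddE !qscaleE qaddE tscale_cat.
Qed.
Lemma qscaleDl v : {morph qscale^~ v: a b / a + b}.
Proof.
move=> a b; elim/quotW: v => x; rewrite /GRing.add /= !qscaleE qaddE.
by apply: pi_teq; apply: tscaleDr.
Qed.
HB.instance Definition _ := GRing.Zmodule_isLmodule.Build R Q qscaleA qscale1 qscaleDr qscaleDl.


Definition eps_raw (s : T) : R := \sum_(x <- s) counit x.1 * counit x.2.
Lemma eps_bil : bilinear_map (fun (b : B) (c : C) => (counit b * counit c : R^o)).
Proof. split=> a m m' n; rewrite eD; [rewrite mulrDl -mulrA | rewrite mulrDr mulrCA]; by []. Qed.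
Lemma eps_teq s t : teq s t -> eps_raw s = eps_raw t.
Proof. by move=> h; apply: (h _ _ eps_bil). Qed.
Lemma eps_cat s t : eps_raw (s ++ t) = eps_raw s + eps_raw t.
Proof. by rewrite /eps_raw big_cat. Qed.
Lemma eps_tmul s t : eps_raw (tmul s t) = eps_raw s * eps_raw t.
Proof.
rewrite /eps_raw /tmul big_allpairs_dep mulr_suml; apply: eq_bigr => x _.
rewrite mulr_sumr; apply: eq_bigr => y _ /=; rewrite !eM.
by rewrite mulrACA.
Qed.
Lemma eN1 (H : hopfAlgType R) : counit (-1 : H) = -1.
Proof. by rewrite -scaleN1r eZ e1 mulr1. Qed.
Lemma eps_gen a : eps_raw (star_gen f g a) = 0.
Proof.
rewrite /eps_raw /star_gen !big_cons big_nil /= !e1 eN1 (fe hf) (fe hg).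
by rewrite mulr1 mulN1r addr0 subrr.
Qed.
Lemma eps_I s : I s -> eps_raw s = 0.
Proof.
move=> [l h]; rewrite (eps_teq h) -/(iexpr _ _ _); elim: l {h} => [|z l IH].
  by rewrite /eps_raw big_nil.
by rewrite iexpr_cons eps_cat IH addr0 !eps_tmul eps_gen mulr0 mul0r.
Qed.
Lemma eps_pi s t : pi s = pi t -> eps_raw s = eps_raw t.
Proof.
move/pi_eqE => /eps_I; rewrite eps_cat /eps_raw /tscale big_map.
move/eqP; rewrite addr_eq0 => /eqP ->; rewrite -sumrN; apply: eq_bigr => x _ /=.
by rewrite eZ mulN1r mulNr opprK.
Qed.

Lemma qmulA : associative qmul.
Proof.
move=> x y z; elim/quotW: x => x; elim/quotW: y => y; elim/quotW: z => z.
by rewrite !qmulE; apply: pi_teq; apply: teq_sym; apply: tmul_assoc.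
Qed.
Lemma qmul1 : left_id qone qmul.
Proof. by move=> x; elim/quotW: x => x; rewrite qmulE; apply: pi_teq; apply: tmul1l. Qed.
Lemma qmulr1 : right_id qone qmul.
Proof. by move=> x; elim/quotW: x => x; rewrite qmulE; apply: pi_teq; apply: tmul1r. Qed.
Lemma qmulDl : left_distributive qmul +%R.
Proof.
move=> x y z; elim/quotW: x => x; elim/quotW: y => y; elim/quotW: z => z.
by rewrite /GRing.add /= !qaddE !qmulE qaddE; apply: pi_teq; apply: tmul_catl.
Qed.
Lemma qmulDr : right_distributive qmul +%R.
Proof.
move=> x y z; elim/quotW: x => x; elim/quotW: y => y; elim/quotW: z => z.
by rewrite /GRing.add /= !qaddE !qmulE qaddE; apply: pi_teq; apply: tmul_catr.
Qed.
Lemma qone_neq0 : qone != 0.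
Proof.
apply/eqP => /eps_pi; rewrite /eps_raw big_cons big_nil /= !e1 mulr1 addr0.
by move/eqP; rewrite oner_eq0.
Qed.
HB.instance Definition _ := GRing.Zmodule_isNzRing.Build Q qmulA qmul1 qmulr1 qmulDl qmulDr qone_neq0.
Lemma qscaleAl (a : R) (u v : Q) : a *: (u * v) = (a *: u) * v.
Proof.
elim/quotW: u => u; elim/quotW: v => v.
rewrite /GRing.mul /GRing.scale /= !qmulE !qscaleE qmulE; apply: pi_teq.
by apply: teq_sym; apply: tmul_scalel.
Qed.
HB.instance Definition _ := GRing.Lmodule_isLalgebra.Build R Q qscaleAl.
Lemma qscaleAr (a : R) (u v : Q) : a *: (u * v) = u * (a *: v).
Proof.
elim/quotW: u => u; elim/quotW: v => v.
rewrite /GRing.mul /GRing.scale /= !qmulE !qscaleE qmulE; apply: pi_teq.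
by apply: teq_sym; apply: tmul_scaler.
Qed.
HB.instance Definition _ := GRing.Lalgebra_isAlgebra.Build R Q qscaleAr.


Lemma addQE (s t : T) : (pi s : Q) + pi t = pi (s ++ t).
Proof. exact: qaddE. Qed.
Lemma scaleQE a (s : T) : a *: (pi s : Q) = pi (tscale a s).
Proof. exact: qscaleE. Qed.
Lemma mulQE (s t : T) : (pi s : Q) * pi t = pi (tmul s t).
Proof. exact: qmulE. Qed.
Lemma zeroQE : (0 : Q) = pi [::].
Proof. by []. Qed.
Lemma oneQE : (1 : Q) = pi (tone B C).
Proof. by []. Qed.

Definition tt (b : B) (c : C) : Q := pi [:: (b, c)].
Lemma pi_tt (s : T) : pi s = \sum_(x <- s) tt x.1 x.2.
Proof.
elim: s => [|x s IH]; first by rewrite big_nil.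
by rewrite big_cons -IH /tt addQE; case: x.
Qed.
Lemma ttDZl a b b' c : tt (a *: b + b') c = a *: tt b c + tt b' c.
Proof.
rewrite /tt scaleQE addQE; apply: pi_teq; apply: teq_tsum => P phi hp.
by rewrite tsum_cat tsum_tscale // !tsum_cons !tsum_nil !addr0 /= (bilDl hp) (bilZl hp).
Qed.
Lemma ttDZr a b c c' : tt b (a *: c + c') = a *: tt b c + tt b c'.
Proof.
rewrite /tt scaleQE addQE; apply: pi_teq; apply: teq_tsum => P phi hp.
by rewrite tsum_cat tsum_tscale // !tsum_cons !tsum_nil !addr0 /= (bilDr hp) (bilZr hp).
Qed.
Lemma ttM b c b' c' : tt b c * tt b' c' = tt (b * b') (c * c').
Proof. by rewrite /tt mulQE. Qed.
Lemma tt11 : tt 1 1 = 1.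
Proof. by []. Qed.
Lemma tt_linl c : linF (fun b => tt b c).
Proof. by move=> a b b'; rewrite ttDZl. Qed.
Lemma tt_linr b : linF (fun c => tt b c).
Proof. by move=> a c c'; rewrite ttDZr. Qed.

Definition iB (b : B) : Q := tt b 1.
Definition iC (c : C) : Q := tt 1 c.

Lemma star_prod : is_star_product f g iB iC.
Proof.
have E : forall s : T, \sum_(x <- s) iB x.1 * iC x.2 = pi s.
  by move=> s; rewrite pi_tt; apply: eq_bigr => x _; rewrite /iB /iC ttM mulr1 mul1r.
split.
- by move=> b c; rewrite /iB /iC !ttM !mulr1 !mul1r.
- by move=> p; exists (repr p); rewrite E reprK.
- move=> s; rewrite E zeroQE; split.
    by move/pi_eqE; rewrite /srelP /tscale /= cats0.
  by move=> h; apply: pi_eq; rewrite /srelP /tscale /= cats0.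
Qed.

Definition Dpair (b : B) (c : C) : tensor Q Q :=
  [seq (tt z.1 w.1, tt z.2 w.2) | z <- comul b, w <- comul c].
Definition Draw (s : T) : tensor Q Q := flatten [seq Dpair p.1 p.2 | p <- s].
Definition psi (M : lmodType R) (phi : Q -> Q -> M) (b : B) (c : C) : M :=
  sw b (fun z1 z2 => sw c (fun w1 w2 => phi (tt z1 w1) (tt z2 w2))).

Lemma tsum_Draw (M : lmodType R) (phi : Q -> Q -> M) s : tsum phi (Draw s) = tsum (psi phi) s.
Proof.
rewrite /tsum /Draw big_flatten /= big_map; apply: eq_bigr => p _.
by rewrite /Dpair big_allpairs_dep.
Qed.
Lemma Draw_cat s t : Draw (s ++ t) = Draw s ++ Draw t.
Proof. by rewrite /Draw map_cat flatten_cat. Qed.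

Section PsiBil.
Context (M : lmodType R) (phi : Q -> Q -> M) (hp : bilinear_map phi).
Lemma bil_tt_w z1 z2 : bilinear_map (fun w1 w2 => phi (tt z1 w1) (tt z2 w2)).
Proof. by split=> a m m' n; rewrite ttDZr ?(bilDl hp) ?(bilZl hp) ?(bilDr hp) ?(bilZr hp). Qed.
Lemma bil_tt_z w1 w2 : bilinear_map (fun z1 z2 => phi (tt z1 w1) (tt z2 w2)).
Proof. by split=> a m m' n; rewrite ttDZl ?(bilDl hp) ?(bilZl hp) ?(bilDr hp) ?(bilZr hp). Qed.
Lemma psi_in_bil c : bilinear_map (fun z1 z2 => sw c (fun w1 w2 => phi (tt z1 w1) (tt z2 w2))).
Proof.
split=> a m m' n; apply: tsum_linF => w1 w2;
  by rewrite ttDZl ?(bilDl hp) ?(bilZl hp) ?(bilDr hp) ?(bilZr hp).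
Qed.
Lemma psi_bil : bilinear_map (psi phi).
Proof.
split=> a m m' n; rewrite /psi.
  by rewrite sw_lin //; apply: psi_in_bil.
by apply: tsum_linF => z1 z2; rewrite sw_lin //; apply: bil_tt_w.
Qed.
End PsiBil.

Lemma Draw_teq s t : teq s t -> teq (Draw s) (Draw t).
Proof. by move=> h; apply: teq_tsum => P phi hp; rewrite !tsum_Draw; apply: h; apply: psi_bil. Qed.
Lemma Draw_scale a s : teq (Draw (tscale a s)) (tscale a (Draw s)).
Proof.
apply: teq_tsum => P phi hp; rewrite tsum_Draw (tsum_tscale _ _ (psi_bil hp)).
by rewrite (tsum_tscale _ _ hp) tsum_Draw.
Qed.

Lemma Draw_mul u v : teq (Draw (tmul u v)) (tmul (Draw u) (Draw v)).
Proof.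
apply: teq_tsum => P phi hp; rewrite tsum_Draw !tsum_tmul.
transitivity (tsum (fun p1 p2 => tsum (fun q1 q2 =>
  sw p1 (fun z1 z2 => sw p2 (fun w1 w2 => sw q1 (fun z1' z2' => sw q2 (fun w1' w2' =>
     phi (tt z1 w1 * tt z1' w1') (tt z2 w2 * tt z2' w2')))))) v) u).
  apply: eq_bigr => p _; apply: eq_bigr => q _ /=.
  rewrite /psi sw_mul; last exact: psi_in_bil.
  apply: tsum_ext => z1 z2.
  transitivity (sw q.1 (fun z1' z2' => sw p.2 (fun w1 w2 => sw q.2 (fun w1' w2' =>
     phi (tt (z1 * z1') (w1 * w1')) (tt (z2 * z2') (w2 * w2')))))).
    by apply: tsum_ext => z1' z2'; rewrite sw_mul //; apply: bil_tt_w.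
  rewrite /sw tsum_exch; apply: tsum_ext => w1 w2; apply: tsum_ext => z1' z2'.
  by apply: tsum_ext => a b; rewrite !ttM.
transitivity (tsum (fun X1 X2 => tsum (fun Y1 Y2 => phi (X1 * Y1) (X2 * Y2)) (Draw v)) (Draw u)); last by [].
rewrite tsum_Draw; apply: eq_bigr => p _ /=; rewrite /psi.
rewrite tsum_exch; apply: tsum_ext => z1 z2; rewrite tsum_exch; apply: tsum_ext => w1 w2.
rewrite tsum_Draw; apply: eq_bigr => q _ /=; rewrite /psi.
by [].
Qed.

Lemma tt_fg x : tt (f x) 1 = tt 1 (g x).
Proof.
apply: pi_eq; exists [:: (tone B C, x, tone B C)]; apply: teq_tsum => P phi hp.
rewrite tsum_cat tsum_tscale // -/(iexpr _ _ _) iexpr_cons cats0 !tsum_tmul.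
rewrite /tsum !big_cons !big_nil /= !addr0 !mul1r !mulr1 (bilNl hp) scaleN1r.
by [].
Qed.

Lemma Draw_gen a : teq (Draw (star_gen f g a)) [::].
Proof.
apply: teq_tsum => P phi hp; rewrite tsum_Draw tsum_nil /star_gen /tsum !big_cons big_nil addr0 /=.
rewrite (bilNl (psi_bil hp)) /psi.
rewrite (sw1 (psi_in_bil hp (g a))).
transitivity (sw (f a) (fun z1 z2 => phi (tt z1 1) (tt z2 1)) - sw (g a) (fun w1 w2 => phi (tt 1 w1) (tt 1 w2))).
  congr (_ - _); apply: tsum_ext => z1 z2; rewrite sw1 //; exact: bil_tt_w.
rewrite (f_sw hf _ (bil_tt_z hp 1 1)) (f_sw hg _ (bil_tt_w hp 1 1)).
by apply/eqP; rewrite subr_eq0; apply/eqP; apply: tsum_ext => a1 a2; rewrite !tt_fg.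
Qed.

Lemma Draw_I s : I s -> teq (Draw s) [::].
Proof.
move=> [l h]; apply: teq_trans (Draw_teq h) _; rewrite -/(iexpr _ _ _).
elim: l {h} => [|z l IH] //; rewrite iexpr_cons Draw_cat.
apply: teq_trans (teq_cat _ IH) _; last by rewrite cats0.
apply: teq_trans (Draw_mul _ _) _.
apply: teq_trans (teq_tmul (Draw_mul _ _) (teq_refl _)) _.
apply: teq_trans (teq_tmul (teq_tmul (teq_refl _) (Draw_gen _)) (teq_refl _)) _.
apply: teq_trans (teq_tmul (tmul_nilr _) (teq_refl _)) _.
by [].
Qed.

Lemma Draw_srel s t : srelP f g s t -> teq (Draw s) (Draw t).
Proof.
move=> /Draw_I h; apply: teq_tsum => P phi hp.
have := h P phi hp; rewrite -/(tsum _ _) -/(tsum _ _) Draw_cat tsum_cat tsum_nil.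
have := @Draw_scale (-1) t P phi hp; rewrite -/(tsum _ _) -/(tsum _ _) => ->.
by rewrite tsum_tscale // scaleN1r => /eqP; rewrite subr_eq0 => /eqP.
Qed.

Definition Smap (s : T) : T := tmap (@antipode R B) (@antipode R C) s.
Lemma Smap_cat s t : Smap (s ++ t) = Smap s ++ Smap t.
Proof. by rewrite /Smap /tmap map_cat. Qed.
Lemma Smap_scale a s : Smap (tscale a s) = tscale a (Smap s).
Proof. by elim: s => [|x s IH] //=; rewrite SZ IH. Qed.
Lemma Smap_teq s t : teq s t -> teq (Smap s) (Smap t).
Proof.
move=> h; apply: teq_tsum => P phi hp; rewrite !tsum_tmap; apply: h.
by split=> a m m' n; rewrite SDZ ?(bilDl hp) ?(bilZl hp) ?(bilDr hp) ?(bilZr hp).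
Qed.
Lemma Smap_mul u v : teq (Smap (tmul u v)) (tmul (Smap v) (Smap u)).
Proof.
apply: teq_tsum => P phi hp; rewrite tsum_tmap !tsum_tmul /Smap /tmap big_map.
rewrite exchange_big /=; apply: eq_bigr => q _; rewrite big_map; apply: eq_bigr => p _ /=.
by rewrite !SM.
Qed.
Lemma SN1 (H : hopfAlgType R) : antipode (-1 : H) = -1.
Proof. by rewrite SN S1. Qed.
Lemma Smap_gen a : Smap (star_gen f g a) = star_gen f g (antipode a).
Proof. by rewrite /Smap /star_gen /tmap /= !S1 !SN1 (fS hf) (fS hg). Qed.
Lemma Smap_I s : I s -> I (Smap s).
Proof.
move=> [l h]; exists [seq (Smap z.2, antipode z.1.2, Smap z.1.1) | z <- l].
apply: teq_trans (Smap_teq h) _; rewrite -!/(iexpr _ _ _).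
elim: l {h} => [|z l IH] //; rewrite !iexpr_cons Smap_cat; apply: teq_cat => //=.
apply: teq_trans (Smap_mul _ _) _.
apply: teq_trans (teq_tmul (teq_refl _) (Smap_mul _ _)) _.
rewrite Smap_gen; apply: teq_sym; exact: tmul_assoc.
Qed.
Lemma Smap_srel s t : srelP f g s t -> srelP f g (Smap s) (Smap t).
Proof. by move=> /Smap_I; rewrite /srelP Smap_cat Smap_scale. Qed.

Definition comulQ (x : Q) : tensor Q Q := Draw (repr x).
Definition counitQ (x : Q) : R := eps_raw (repr x).
Definition antipodeQ (x : Q) : Q := pi (Smap (repr x)).

Lemma comulQ_pi s : teq (comulQ (pi s)) (Draw s).
Proof. by apply: Draw_srel; apply: reprP. Qed.
Lemma counitQ_pi s : counitQ (pi s) = eps_raw s.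
Proof. by apply: eps_pi; rewrite reprK. Qed.
Lemma antipodeQ_pi s : antipodeQ (pi s) = pi (Smap s).
Proof. by apply: pi_eq; apply: Smap_srel; apply: reprP. Qed.
Lemma counitQ_tt b c : counitQ (tt b c) = counit b * counit c.
Proof. by rewrite counitQ_pi /eps_raw big_cons big_nil addr0. Qed.
Lemma antipodeQ_tt b c : antipodeQ (tt b c) = tt (antipode b) (antipode c).
Proof. by rewrite antipodeQ_pi. Qed.
Lemma tsum_comulQ (M : lmodType R) (phi : Q -> Q -> M) s : bilinear_map phi ->
  tsum phi (comulQ (pi s)) = tsum (psi phi) s.
Proof. by move=> hp; rewrite -tsum_Draw; apply: (comulQ_pi s). Qed.
Lemma tsum_comulQ_tt (M : lmodType R) (phi : Q -> Q -> M) b c : bilinear_map phi ->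
  tsum phi (comulQ (tt b c)) = psi phi b c.
Proof. by move=> hp; rewrite tsum_comulQ // tsum_cons tsum_nil addr0. Qed.

Lemma comulQ_lin a x y : teq (comulQ (a *: x + y)) (tscale a (comulQ x) ++ comulQ y).
Proof.
elim/quotW: x => x; elim/quotW: y => y; rewrite scaleQE addQE.
apply: teq_trans (comulQ_pi _) _; rewrite Draw_cat; apply: teq_cat.
  apply: teq_trans (Draw_scale _ _) _; apply: teq_tscale; apply: teq_sym; exact: comulQ_pi.
apply: teq_sym; exact: comulQ_pi.
Qed.
Lemma comulQ_mul x y : teq (comulQ (x * y)) (tmul (comulQ x) (comulQ y)).
Proof.
elim/quotW: x => x; elim/quotW: y => y; rewrite mulQE.
apply: teq_trans (comulQ_pi _) _; apply: teq_trans (Draw_mul _ _) _.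
by apply: teq_tmul; apply: teq_sym; apply: comulQ_pi.
Qed.
Lemma comulQ_one : teq (comulQ 1) (tone Q Q).
Proof.
apply: teq_tsum => P phi hp; rewrite oneQE tsum_comulQ // /tone /tsum !big_cons !big_nil /= !addr0.
rewrite /psi (sw1 (psi_in_bil hp 1)) (sw1 (bil_tt_w hp 1 1)).
by rewrite tt11.
Qed.

Lemma counitQ_lin a x y : counitQ (a *: x + y) = a * counitQ x + counitQ y.
Proof.
elim/quotW: x => x; elim/quotW: y => y; rewrite scaleQE addQE !counitQ_pi eps_cat.
congr (_ + _); rewrite /eps_raw /tscale big_map mulr_sumr; apply: eq_bigr => z _ /=.
by rewrite eZ mulrA.
Qed.
Lemma counitQ_mul x y : counitQ (x * y) = counitQ x * counitQ y.
Proof. by elim/quotW: x => x; elim/quotW: y => y; rewrite mulQE !counitQ_pi eps_tmul. Qed.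
Lemma counitQ_one : counitQ 1 = 1.
Proof. by rewrite oneQE counitQ_pi /eps_raw big_cons big_nil /= !e1 mulr1 addr0. Qed.

Lemma counitQ_l x : \sum_(z <- comulQ x) counitQ z.1 *: z.2 = x.
Proof.
rewrite -{2}[x]reprK pi_tt; set r := repr x.
rewrite -/(tsum (fun a b => counitQ a *: b) _) /comulQ -/r tsum_Draw /tsum.
apply: eq_bigr => p _; rewrite /psi.
transitivity (sw p.1 (fun z1 z2 => counit z1 *: tt z2 p.2)); last first.
  by rewrite (@e_lG _ _ _ (fun z => tt z p.2)) //; apply: tt_linl.
apply: tsum_ext => z1 z2.
transitivity (counit z1 *: sw p.2 (fun w1 w2 => counit w1 *: tt z2 w2)); last first.
  by rewrite (@e_lG _ _ _ (fun w => tt z2 w)) //; apply: tt_linr.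
rewrite /sw tsum_scale; apply: tsum_ext => w1 w2.
by rewrite counitQ_tt scalerA.
Qed.
Lemma counitQ_r x : \sum_(z <- comulQ x) counitQ z.2 *: z.1 = x.
Proof.
rewrite -{2}[x]reprK pi_tt; set r := repr x.
rewrite -/(tsum (fun a b => counitQ b *: a) _) /comulQ -/r tsum_Draw /tsum.
apply: eq_bigr => p _; rewrite /psi.
transitivity (sw p.1 (fun z1 z2 => counit z2 *: tt z1 p.2)); last first.
  by rewrite (@e_rG _ _ _ (fun z => tt z p.2)) //; apply: tt_linl.
apply: tsum_ext => z1 z2.
transitivity (counit z2 *: sw p.2 (fun w1 w2 => counit w2 *: tt z1 w1)); last first.
  by rewrite (@e_rG _ _ _ (fun w => tt z1 w)) //; apply: tt_linr.
rewrite /sw tsum_scale; apply: tsum_ext => w1 w2.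
by rewrite counitQ_tt scalerA.
Qed.

Lemma antipodeQ_lin a x y : antipodeQ (a *: x + y) = a *: antipodeQ x + antipodeQ y.
Proof.
elim/quotW: x => x; elim/quotW: y => y; rewrite scaleQE addQE !antipodeQ_pi.
by rewrite Smap_cat Smap_scale scaleQE addQE.
Qed.

Lemma tt_suml I (r : seq I) (F : I -> B) c : tt (\sum_(i <- r) F i) c = \sum_(i <- r) tt (F i) c.
Proof. exact: (linF_sum _ _ (tt_linl c)). Qed.
Lemma tt_sumr I (r : seq I) (F : I -> C) b : tt b (\sum_(i <- r) F i) = \sum_(i <- r) tt b (F i).
Proof. exact: (linF_sum _ _ (tt_linr b)). Qed.
Lemma tt_alg (a c : R) : tt a%:A c%:A = (a * c)%:A.
Proof.
by rewrite /GRing.scale /= -/(a *: 1) -/(c *: 1) (linFZ _ _ (tt_linl _)) (linFZ _ _ (tt_linr _)) scalerA tt11.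
Qed.

Lemma antipodeQ_l x : \sum_(z <- comulQ x) antipodeQ z.1 * z.2 = (counitQ x)%:A.
Proof.
rewrite -/(tsum (fun a b => antipodeQ a * b) _) /comulQ /counitQ; set r := repr x.
rewrite tsum_Draw /eps_raw scaler_suml; apply: eq_bigr => p _; rewrite /psi.
transitivity (tt (sw p.1 (fun a b => antipode a * b)) (sw p.2 (fun a b => antipode a * b))).
  rewrite /sw /tsum tt_suml; apply: eq_bigr => z _; rewrite tt_sumr; apply: eq_bigr => w _.
  by rewrite antipodeQ_tt ttM.
by rewrite !S_l tt_alg.
Qed.
Lemma antipodeQ_r x : \sum_(z <- comulQ x) z.1 * antipodeQ z.2 = (counitQ x)%:A.
Proof.
rewrite -/(tsum (fun a b => a * antipodeQ b) _) /comulQ /counitQ; set r := repr x.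
rewrite tsum_Draw /eps_raw scaler_suml; apply: eq_bigr => p _; rewrite /psi.
transitivity (tt (sw p.1 (fun a b => a * antipode b)) (sw p.2 (fun a b => a * antipode b))).
  rewrite /sw /tsum tt_suml; apply: eq_bigr => z _; rewrite tt_sumr; apply: eq_bigr => w _.
  by rewrite antipodeQ_tt ttM.
by rewrite !S_r tt_alg.
Qed.

Lemma tsum_comulQ_lin (M : lmodType R) (phi : Q -> Q -> M) a x y : bilinear_map phi ->
  tsum phi (comulQ (a *: x + y)) = a *: tsum phi (comulQ x) + tsum phi (comulQ y).
Proof. by move=> hp; rewrite -tsum_tscale // -tsum_cat; apply: (comulQ_lin a x y). Qed.

Lemma sum_tcomul_l (M N : lmodType R) (D : M -> tensor M M) (phi : M -> M -> M -> N) s :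
  \sum_(x <- tcomul_l D s) phi x.1.1 x.1.2 x.2 = tsum (fun y1 y2 => tsum (fun z1 z2 => phi z1 z2 y2) (D y1)) s.
Proof. by rewrite /tcomul_l big_flatten /= big_map; apply: eq_bigr => y _; rewrite big_map. Qed.
Lemma sum_tcomul_r (M N : lmodType R) (D : M -> tensor M M) (phi : M -> M -> M -> N) s :
  \sum_(x <- tcomul_r D s) phi x.1.1 x.1.2 x.2 = tsum (fun y1 y2 => tsum (fun z1 z2 => phi y1 z1 z2) (D y2)) s.
Proof. by rewrite /tcomul_r big_flatten /= big_map; apply: eq_bigr => y _; rewrite big_map. Qed.

Lemma comulQ_coassoc x : teq3 (tcomul_l comulQ (comulQ x)) (tcomul_r comulQ (comulQ x)).
Proof.
elim/quotW: x => s P phi hp; rewrite sum_tcomul_l sum_tcomul_r.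
case: (hp) => h1 h2 h3.
have bl : forall y, bilinear_map (fun z1 z2 => phi z1 z2 y).
  by move=> y; split=> *; rewrite ?h1 ?h2.
have br : forall y, bilinear_map (fun z1 z2 => phi y z1 z2).
  by move=> y; split=> *; rewrite ?h2 ?h3.
rewrite !tsum_comulQ; first last.
1,2: split=> a m m' n; first [ by rewrite tsum_comulQ_lin //; first [apply: bl | apply: br]
                             | by apply: tsum_linF => z1 z2; rewrite ?h1 ?h3 ].
apply: eq_bigr => p _; rewrite /psi.
transitivity (sw p.1 (fun z1 z2 => sw p.2 (fun w1 w2 => sw z1 (fun a b => sw w1 (fun c d =>
   phi (tt a c) (tt b d) (tt z2 w2)))))).
  apply: tsum_ext => z1 z2; apply: tsum_ext => w1 w2.
  by rewrite tsum_comulQ_tt //; apply: bl.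
transitivity (sw p.1 (fun z1 z2 => sw p.2 (fun w1 w2 => sw z2 (fun a b => sw w2 (fun c d =>
   phi (tt z1 w1) (tt a c) (tt b d)))))); last first.
  apply: tsum_ext => z1 z2; apply: tsum_ext => w1 w2.
  by rewrite tsum_comulQ_tt //; apply: br.
transitivity (sw p.1 (fun z1 z2 => sw z1 (fun a b => sw p.2 (fun w1 w2 => sw w1 (fun c d =>
   phi (tt a c) (tt b d) (tt z2 w2)))))).
  by apply: tsum_ext => z1 z2; rewrite /sw tsum_exch.
transitivity (sw p.1 (fun z1 z2 => sw z2 (fun a b => sw p.2 (fun w1 w2 => sw w2 (fun c d =>
   phi (tt z1 w1) (tt a c) (tt b d)))))); last first.
  by apply: tsum_ext => z1 z2; rewrite /sw tsum_exch.
rewrite (@sw_coassoc _ _ _ (fun a b z2 => sw p.2 (fun w1 w2 => sw w1 (fun c d =>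
   phi (tt a c) (tt b d) (tt z2 w2))))); last first.
  split=> *; do 2 (apply: tsum_linF => ? ?); by rewrite ttDZl ?h1 ?h2 ?h3.
apply: tsum_ext => z1 z2; apply: tsum_ext => a b.
rewrite (@sw_coassoc _ _ _ (fun c d w2 => phi (tt z1 c) (tt a d) (tt b w2))) //.
by split=> *; rewrite ttDZr ?h1 ?h2 ?h3.
Qed.

Lemma hopfQ : hopf_axioms comulQ counitQ antipodeQ.
Proof.
split; split.
- exact: comulQ_lin.
- exact: comulQ_coassoc.
- exact: comulQ_mul.
- exact: comulQ_one.
- exact: counitQ_lin.
- exact: counitQ_mul.
- exact: counitQ_one.
- exact: counitQ_l.
- exact: counitQ_r.
- exact: antipodeQ_lin.
- exact: antipodeQ_l.
- exact: antipodeQ_r.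
Qed.

Definition PQ : hopfAlgType R := @HopfAlg R Q comulQ counitQ antipodeQ hopfQ.

Lemma iB_morph : hopf_morphism (iB : B -> PQ).
Proof.
split.
- by move=> a x y; rewrite /iB ttDZl.
- by move=> x y; rewrite /iB ttM mulr1.
- by rewrite /iB tt11.
- move=> x; apply: teq_tsum => P phi hp; rewrite /= tsum_comulQ_tt // tsum_tmap /psi.
  by apply: tsum_ext => z1 z2; rewrite sw1 //; apply: bil_tt_w.
- by move=> x; rewrite /= counitQ_tt e1 mulr1.
Qed.
Lemma iC_morph : hopf_morphism (iC : C -> PQ).
Proof.
split.
- by move=> a x y; rewrite /iC ttDZr.
- by move=> x y; rewrite /iC ttM mulr1.
- by rewrite /iC tt11.
- move=> x; apply: teq_tsum => P phi hp; rewrite /= tsum_comulQ_tt // tsum_tmap /psi.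
  by rewrite (sw1 (psi_in_bil hp x)).
- by move=> x; rewrite /= counitQ_tt e1 mul1r.
Qed.

Lemma star_exists : exists (P : hopfAlgType R) (jB : B -> P) (jC : C -> P),
    [/\ is_star_product f g jB jC, hopf_morphism jB & hopf_morphism jC].
Proof. by exists PQ, iB, iC; split; [exact: star_prod | exact: iB_morph | exact: iC_morph]. Qed.

End Star.


Unset Implicit Arguments.

Theorem lemma3p11 (R : idomainType) (HR : is_field R \/ dedekind_ring R)
  (A B C : hopfAlgType R) (f : A -> B) (g : A -> C)
  (hf : hopf_morphism f) (hg : hopf_morphism g) :
  exists (P : hopfAlgType R) (iB : B -> P) (iC : C -> P),
    [/\ is_star_product f g iB iC, hopf_morphism iB & hopf_morphism iC].
Proof. exact: (star_exists hf hg). Qed.
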